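(* Let $1\le m<n$, $\boldsymbol\xi=(\xi_1,\dots,\xi_{n-1})\in\mathbb Z_{\ge0}^{n-1}$ and $x,\Lambda_1,\dots,\Lambda_n\in\mathbb C$. (i) For any partition $\boldsymbol I=(I_{m+1},\dots,I_n)$ of $\{1,\dots,\xi_m\}$ with $\eta_s:=\eta_s(\boldsymbol I)\le\xi_s$ for $s=m+1,\dots,n-1$, and $\boldsymbol\eta=(\eta_{m+1},\dots,\eta_{n-1})$, $$\mathrm{Sym}_{\ddot{\boldsymbol t}}\Big[U_{\boldsymbol I}\big(\ddot{\boldsymbol t}_{[\boldsymbol\eta]};\boldsymbol t^m\big)L_{\boldsymbol\eta,\ddot{\boldsymbol\xi}}(\ddot{\boldsymbol t})\Big]=\prod_{s=m+1}^{n-1}\frac{1}{\eta_s!}\ \mathrm{Sym}_{\ddot{\boldsymbol t}}\Big[W_{\boldsymbol I}\big(\ddot{\boldsymbol t}_{[\boldsymbol\eta]};\boldsymbol t^m\big)L_{\boldsymbol\eta,\ddot{\boldsymbol\xi}}(\ddot{\boldsymbol t})\Big].$$ (ii) For any partition $\boldsymbol J=(J_1,\dots,J_m)$ of $\{1,\dots,\xi_m\}$ with $\zeta_s:=\zeta_s(\boldsymbol J)\le\xi_s$ for $s=1,\dots,m-1$, and $\boldsymbol\zeta=(\zeta_1,\dots,\zeta_{m-1})$, $$\mathrm{Sym}_{\dot{\boldsymbol t}}\Big[\widetilde U_{\boldsymbol J}\big(\dot{\boldsymbol t}_{(\dot{\boldsymbol\xi}-\boldsymbol\zeta,\dot{\boldsymbol\xi}]};\check{\boldsymbol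 t}^m\big)\widetilde L_{\boldsymbol\zeta,\dot{\boldsymbol\xi}}(\dot{\boldsymbol t})\Big]=\prod_{s=1}^{m-1}\frac{1}{\zeta_s!}\ \mathrm{Sym}_{\dot{\boldsymbol t}}\Big[\widetilde W_{\boldsymbol J}\big(\dot{\boldsymbol t}_{(\dot{\boldsymbol\xi}-\boldsymbol\zeta,\dot{\boldsymbol\xi}]};\check{\boldsymbol t}^m\big)\widetilde L_{\boldsymbol\zeta,\dot{\boldsymbol\xi}}(\dot{\boldsymbol t})\Big],$$ where $\check{\boldsymbol t}^m=(t^m_{\xi_m},\dots,t^m_1)$.
   Context: Notation. $E_{ab}$ denotes a matrix unit; entries of an operator $X$ on $(\mathbb{C}^k)^{\otimes r}$ are written $X^{a_1\dots a_r}_{b_1\dots b_r}$ (upper = row, lower = column). $A^{(i)}$ is $A$ acting in the $i$-th tensor factor; $(A\otimes B)^{(ij)}=A^{(i)}B^{(j)}$. $\prod^{\rightarrow}_{1\le i\le k}X_i=X_1\cdots X_k$, $\prod^{\leftarrow}_{1\le i\le k}X_i=X_k\cdots X_1$. $R^{\langle k\rangle}(u)=1+u^{-1}\sum_{a,b=1}^kE_{ab}\otimes E_{ba}$. $\mathrm{Sym}_{y_1,\dots,y_k}f=\sum_{\sigma\in S_k}f(y_{\sigma(1)},\dots,y_{\sigma(k)})$. Yangian. $Y(\mathfrak{gl}_k)$ is generated by $(T^a_b)^{\{s\}}$, $a,b\le k$, $s\ge1$, with $T^a_b(u)=\delta_{ab}+\sum_{s\ge1}(T^a_b)^{\{s\}}u^{-s}$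 and relations $(u-v)[T^a_b(u),T^c_d(v)]=T^a_d(u)T^c_b(v)-T^a_d(v)T^c_b(u)$; $T(u)=\sum E_{ab}\otimes T^a_b(u)$. Embeddings $\phi_m:Y(\mathfrak{gl}_m)\to Y(\mathfrak{gl}_n)$, $T^a_b(u)\mapsto T^a_b(u)$, and $\psi_{n-m}:Y(\mathfrak{gl}_{n-m})\to Y(\mathfrak{gl}_n)$, $T^a_b(u)\mapsto T^{a+m}_{b+m}(u)$. Bethe vectors. For $k\ge2$, $\boldsymbol\xi=(\xi_1,\dots,\xi_{k-1})\in\mathbb Z_{\ge0}^{k-1}$, $\xi^a=\xi_1+\dots+\xi_a$ ($\xi^0=0$), variables $\boldsymbol t^a=(t^a_1,\dots,t^a_{\xi_a})$, in $\mathrm{End}((\mathbb C^k)^{\otimes\xi^{k-1}})\otimes Y(\mathfrak{gl}_k)$ set $\mathbb T^{[j]}(\boldsymbol t^j)=\prod^{\rightarrow}_{1\le i\le\xi_j}T^{(\xi^{j-1}+i)}(t^j_i)$, $\mathbb R^{[i,j]}(\boldsymbol t^i,\boldsymbol t^j)=\prod^{\rightarrow}_{1\le p\le\xi_i}\prod^{\leftarrow}_{1\le l\le\xi_j}R^{(\xi^{i-1}+p,\,\xi^{j-1}+l)}(t^i_p-t^j_l)$, $\widehat{\mathbb T}_{\boldsymbol\xi}(\boldsymbol t)=\mathbb T^{[1]}\cdots\mathbb T^{[k-1]}\prod^{\leftarrow}_{1\le i\le k-1}\prod^{\leftarrow}_{1\le j<i}\mathbb R^{[i,j]}(\boldsymbol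 t^i,\boldsymbol t^j)$; $\mathbb B^{\langle k\rangle}_{\boldsymbol\xi}(\boldsymbol t)$ is its entry with upper indices ($a$ repeated $\xi_a$ times, $a=1,\dots,k-1$) and lower indices ($a+1$ repeated $\xi_a$ times); $\mathbb B^{\langle1\rangle}=1$. $\dot{\boldsymbol\xi}=(\xi_1,\dots,\xi_{m-1})$, $\ddot{\boldsymbol\xi}=(\xi_{m+1},\dots,\xi_{n-1})$, $\dot{\boldsymbol t}=(\boldsymbol t^1,\dots,\boldsymbol t^{m-1})$, $\ddot{\boldsymbol t}=(\boldsymbol t^{m+1},\dots,\boldsymbol t^{n-1})$, $\boldsymbol t^m=(t^m_1,\dots,t^m_{\xi_m})$; $\mathrm{Sym}_{\dot{\boldsymbol t}}$ ($\mathrm{Sym}_{\ddot{\boldsymbol t}}$) is the composition of $\mathrm{Sym}_{\boldsymbol t^a}$ over $a=1,\dots,m-1$ (over $a=m+1,\dots,n-1$). Weight functions. For a partition $\boldsymbol I=(I_{m+1},\dots,I_n)$ of $\{1,\dots,M\}$, $\eta_l(\boldsymbol I)=|\bigcup_{k=l+1}^nI_k|$ and $i^{(l)}_1<\dots<i^{(l)}_{\eta_l(\boldsymbol I)}$ are the elements of $\bigcup_{k=l+1}^nI_k$ ($l=m,\dots,n-1$); for variables $\boldsymbol v^l=(v^l_1,\dots,v^l_{\eta_l(\boldsymbol I)})$, $U_{\boldsymbol I}(\boldsymbol v^{m+1},\dots,\boldsymbol v^{n-1};\boldsymbol v^m)=\prod_{l=m+1}^{n-1}\prod_{a=1}^{\eta_l}\Big(\prod_{c:\,i^{(l-1)}_c=i^{(l)}_a}\frac{1}{v^l_a-v^{l-1}_c}\prod_{d:\,i^{(l-1)}_d>i^{(l)}_a}\frac{v^l_a-v^{l-1}_d+1}{v^l_a-v^{l-1}_d}\prod_{b=a+1}^{\eta_l}\frac{v^l_b-v^l_a+1}{v^l_b-v^l_a}\Big)$,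 and $W_{\boldsymbol I}=\mathrm{Sym}_{\boldsymbol v^{m+1}}\cdots\mathrm{Sym}_{\boldsymbol v^{n-1}}U_{\boldsymbol I}$. For a partition $\boldsymbol J=(J_1,\dots,J_m)$ of $\{1,\dots,M\}$, $\zeta_l(\boldsymbol J)=|\bigcup_{k=1}^lJ_k|$ and $j^{(l)}_1<\dots<j^{(l)}_{\zeta_l(\boldsymbol J)}$ are the elements of $\bigcup_{k=1}^lJ_k$ ($l=1,\dots,m$); for $\boldsymbol u^l=(u^l_1,\dots,u^l_{\zeta_l(\boldsymbol J)})$, $\widetilde U_{\boldsymbol J}(\boldsymbol u^1,\dots,\boldsymbol u^{m-1};\boldsymbol u^m)=\prod_{l=2}^{m}\prod_{a=1}^{\zeta_l}\Big(\prod_{c:\,j^{(l-1)}_c<j^{(l)}_a}\frac{u^l_a-u^{l-1}_c+1}{u^l_a-u^{l-1}_c}\prod_{d:\,j^{(l-1)}_d=j^{(l)}_a}\frac{1}{u^l_a-u^{l-1}_d}\prod_{b=a+1}^{\zeta_l}\frac{u^l_a-u^l_b+1}{u^l_a-u^l_b}\Big)$, and $\widetilde W_{\boldsymbol J}=\mathrm{Sym}_{\boldsymbol u^1}\cdots\mathrm{Sym}_{\boldsymbol u^{m-1}}\widetilde U_{\boldsymbol J}$. Arguments: $(\ddot{\boldsymbol t}_{[\boldsymbol\eta]};\boldsymbol t^m)$ means $\boldsymbol v^l=(t^l_1,\dots,t^l_{\eta_l})$ ($l>m$), $\boldsymbol v^m=\boldsymbol t^m$; $(\dot{\boldsymbol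 t}_{(\dot{\boldsymbol\xi}-\boldsymbol\zeta,\dot{\boldsymbol\xi}]};\check{\boldsymbol t}^m)$ means $\boldsymbol u^l=(t^l_{\xi_l-\zeta_l+1},\dots,t^l_{\xi_l})$ ($l<m$), $\boldsymbol u^m=\check{\boldsymbol t}^m$. Functions $L,\widetilde L$ ($Y(\mathfrak{gl}_n)$-valued). With $\ddot{\boldsymbol t}_{(\boldsymbol\eta,\ddot{\boldsymbol\xi}]}$ the groups $(t^b_{\eta_b+1},\dots,t^b_{\xi_b})$, $b=m+1,\dots,n-1$, and $\dot{\boldsymbol t}_{[\dot{\boldsymbol\xi}-\boldsymbol\zeta]}$ the groups $(t^a_1,\dots,t^a_{\xi_a-\zeta_a})$, $a=1,\dots,m-1$: $L_{\boldsymbol\eta,\ddot{\boldsymbol\xi}}(\ddot{\boldsymbol t})=\prod_{a=m+1}^{n-2}\prod_{i=1}^{\eta_{a+1}}\prod_{j=\eta_a+1}^{\xi_a}\frac{t^{a+1}_i-t^a_j+1}{t^{a+1}_i-t^a_j}\prod_{l=m+1}^{n-1}\prod_{i=1}^{\eta_l}\frac{t^l_i-x+\Lambda_l}{t^l_i-x}\ \psi_{n-m}\big(\mathbb B^{\langle n-m\rangle}_{\ddot{\boldsymbol\xi}-\boldsymbol\eta}(\ddot{\boldsymbol t}_{(\boldsymbol\eta,\ddot{\boldsymbol\xi}]})\big)$, $\widetilde L_{\boldsymbol\zeta,\dot{\boldsymbol\xi}}(\dot{\boldsymbol t})=\prod_{a=1}^{m-2}\prod_{i=1}^{\xi_{a+1}-\zeta_{a+1}}\prod_{j=\xi_a-\zeta_a+1}^{\xi_a}\frac{t^{a+1}_i-t^a_j+1}{t^{a+1}_i-t^a_j}\prod_{l=1}^{m-1}\prod_{i=0}^{\zeta_l-1}\frac{t^l_{\xi_l-i}-x+\Lambda_{l+1}}{t^l_{\xi_l-i}-x}\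 \phi_m\big(\mathbb B^{\langle m\rangle}_{\dot{\boldsymbol\xi}-\boldsymbol\zeta}(\dot{\boldsymbol t}_{[\dot{\boldsymbol\xi}-\boldsymbol\zeta]})\big)$. *)

(* Defs.v *)
From HB Require Import structures.
From mathcomp Require Import all_boot all_order all_algebra all_fingroup all_field.
Set Implicit Arguments. Unset Strict Implicit. Unset Printing Implicit Defensive.
Import Order.TTheory GRing.Theory Num.Theory.
Local Open Scope ring_scope.

Notation C := algC.

(* Families of variables: v a i = v^a_i (both indices 1-based). *)
Definition vars := nat -> nat -> C.

Definition pnat (k : nat) (s : 'S_k) (j : nat) : nat :=
  oapp (fun o : 'I_k => val (s o)) j (insub j).

Definition permv (a k : nat) (s : 'S_k) (v : vars) : vars :=
  fun b i => if (b == a) && (0 < i <= k)%N then v a (pnat s i.-1).+1 else v b i.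

Definition SymV (R : zmodType) (a k : nat) (F : vars -> R) : vars -> R :=
  fun v => \sum_(s : 'S_k) F (permv a s v).

Definition SymGroups (R : zmodType) (gs : seq (nat * nat)) (F : vars -> R) : vars -> R :=
  foldr (fun p G => SymV p.1 p.2 G) F gs.

(* ---------- operators on (C^k)^{(x) N} (x) A ---------- *)
Definition mi (N k : nat) := {ffun 'I_N -> 'I_k}.
Definition op (A : lalgType C) (N k : nat) := mi N k -> mi N k -> A.

Definition idop (A : lalgType C) N k : op A N k := fun r c => (r == c)%:R.
Definition mulop (A : lalgType C) N k (X Y : op A N k) : op A N k :=
  fun r c => \sum_(j : mi N k) X r j * Y j c.
Definition prodop (A : lalgType C) N k (l : seq (op A N k)) : op A N k :=
  foldr (@mulop A N k) (@idop A N k) l.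

(* value (0-based) of the multi-index r at the 0-based position p *)
Definition atn N k (r : mi N k) (p : nat) : nat :=
  oapp (fun i : 'I_N => val (r i)) 0%N (insub p).

(* T^{(p)}(u), with T a b u = T^a_b(u) (a, b 1-based); p 0-based position *)
Definition Tpos (A : lalgType C) N k (T : nat -> nat -> C -> A) (p : nat) (u : C)
  : op A N k :=
  fun r c => if [forall q : 'I_N, (val q != p) ==> (r q == c q)]
             then T (atn r p).+1 (atn c p).+1 u else 0.

(* R^{(p,q)}(u) = 1 + u^{-1} P^{(pq)} *)
Definition Rpos (A : lalgType C) N k (p q : nat) (u : C) : op A N k :=
  fun r c => ((r == c)%:R
      + u^-1 * ((atn r p == atn c q) && (atn r q == atn c p)
                && [forall y : 'I_N, ((val y != p) && (val y != q)) ==> (r y == c y)])%:R)%:A.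

Definition psum (xi : nat -> nat) (a : nat) : nat := (\sum_(1 <= b < a.+1) xi b)%N.
(* 0-based tensor position of the pair (j, i), i.e. xi^{j-1} + i - 1 *)
Definition posn (xi : nat -> nat) (j i : nat) : nat := (psum xi j.-1 + i.-1)%N.

Definition Tblock (A : lalgType C) N k (T : nat -> nat -> C -> A) (xi : nat -> nat)
  (t : vars) (j : nat) : op A N k :=
  prodop [seq @Tpos A N k T (posn xi j i) (t j i) | i <- iota 1 (xi j)].

Definition Rblock (A : lalgType C) N k (xi : nat -> nat) (t : vars) (i j : nat)
  : op A N k :=
  prodop (flatten [seq [seq @Rpos A N k (posn xi i p) (posn xi j l) (t i p - t j l)
                        | l <- rev (iota 1 (xi j))] | p <- iota 1 (xi i)]).

Definition That (A : lalgType C) (K : nat) (T : nat -> nat -> C -> A)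
  (xi : nat -> nat) (t : vars) : op A (psum xi K) K.+1 :=
  prodop ([seq @Tblock A (psum xi K) K.+1 T xi t j | j <- iota 1 K]
       ++ [seq @Rblock A (psum xi K) K.+1 xi t ij.1 ij.2
          | ij <- flatten [seq [seq (i, j) | j <- rev (iota 1 i.-1)]
                           | i <- rev (iota 1 K)]]).

(* 0-based block number minus one of a 0-based position x *)
Definition blk (xi : nat -> nat) (K x : nat) : nat :=
  count (fun a => psum xi a <= x)%N (iota 1 K).

Definition upper_idx (xi : nat -> nat) (K : nat) : mi (psum xi K) K.+1 :=
  [ffun x : 'I_(psum xi K) => inord (blk xi K x)].
Definition lower_idx (xi : nat -> nat) (K : nat) : mi (psum xi K) K.+1 :=
  [ffun x : 'I_(psum xi K) => inord (blk xi K x).+1].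

(* Bethe vector B^{<k>}_xi(t), built from the entries T a b (1 <= a,b <= k) *)
Definition Bethe (A : lalgType C) (k : nat) (T : nat -> nat -> C -> A)
  (xi : nat -> nat) (t : vars) : A :=
  match k with
  | 0 => 1
  | K.+1 => @That A K T xi t (upper_idx xi K) (lower_idx xi K)
  end.

(* partition I = (I_{m+1},..,I_n) of {1..M} given by labels lab j in {m+1..n} *)
Definition etaI (M : nat) (lab : nat -> nat) (l : nat) : nat :=
  count (fun j => l < lab j)%N (iota 1 M).
Definition iI (M : nat) (lab : nat -> nat) (l a : nat) : nat :=
  nth 0%N [seq j <- iota 1 M | (l < lab j)%N] a.-1.

Definition U_I (n m M : nat) (lab : nat -> nat) (v : vars) : C :=
  \prod_(m.+1 <= l < n) \prod_(1 <= a < (etaI M lab l).+1)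
   ( (\prod_(1 <= c < (etaI M lab l.-1).+1 | iI M lab l.-1 c == iI M lab l a)
        (v l a - v l.-1 c)^-1)
   * (\prod_(1 <= d < (etaI M lab l.-1).+1 | (iI M lab l a < iI M lab l.-1 d)%N)
        ((v l a - v l.-1 d + 1) / (v l a - v l.-1 d)))
   * (\prod_(a.+1 <= b < (etaI M lab l).+1)
        ((v l b - v l a + 1) / (v l b - v l a))) ).

Definition W_I (n m M : nat) (lab : nat -> nat) : vars -> C :=
  SymGroups [seq (l, etaI M lab l) | l <- iota m.+1 (n - m.+1)] (U_I n m M lab).

(* partition J = (J_1,..,J_m) of {1..M} given by labels jl j in {1..m} *)
Definition zetaJ (M : nat) (jl : nat -> nat) (l : nat) : nat :=
  count (fun j => jl j <= l)%N (iota 1 M).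
Definition jJ (M : nat) (jl : nat -> nat) (l a : nat) : nat :=
  nth 0%N [seq j <- iota 1 M | (jl j <= l)%N] a.-1.

Definition Ut_J (m M : nat) (jl : nat -> nat) (u : vars) : C :=
  \prod_(2 <= l < m.+1) \prod_(1 <= a < (zetaJ M jl l).+1)
   ( (\prod_(1 <= c < (zetaJ M jl l.-1).+1 | (jJ M jl l.-1 c < jJ M jl l a)%N)
        ((u l a - u l.-1 c + 1) / (u l a - u l.-1 c)))
   * (\prod_(1 <= d < (zetaJ M jl l.-1).+1 | jJ M jl l.-1 d == jJ M jl l a)
        (u l a - u l.-1 d)^-1)
   * (\prod_(a.+1 <= b < (zetaJ M jl l).+1)
        ((u l a - u l b + 1) / (u l a - u l b))) ).

Definition Wt_J (m M : nat) (jl : nat -> nat) : vars -> C :=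
  SymGroups [seq (l, zetaJ M jl l) | l <- iota 1 m.-1] (Ut_J m M jl).

(* the argument (dot t_{(xi - zeta, xi]} ; check t^m) *)
Definition argJ (m : nat) (xi zeta : nat -> nat) (t : vars) : vars :=
  fun l a => if (l < m)%N then t l (xi l - zeta l + a)%N
             else if l == m then t m (xi m + 1 - a)%N else t l a.

Definition Lddot (A : lalgType C) (n m : nat) (T : nat -> nat -> C -> A)
  (xi : nat -> nat) (x : C) (Lam : nat -> C) (eta : nat -> nat) (t : vars) : A :=
  ((\prod_(m.+1 <= a < n.-1) \prod_(1 <= i < (eta a.+1).+1)
      \prod_((eta a).+1 <= j < (xi a).+1)
        ((t a.+1 i - t a j + 1) / (t a.+1 i - t a j)))
   * (\prod_(m.+1 <= l < n) \prod_(1 <= i < (eta l).+1)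
        ((t l i - x + Lam l) / (t l i - x))))
  *: Bethe (n - m) (fun a b => T (a + m)%N (b + m)%N)
       (fun a => xi (a + m)%N - eta (a + m)%N)%N
       (fun a i => t (a + m)%N (eta (a + m)%N + i)%N).

Definition Ltilde (A : lalgType C) (m : nat) (T : nat -> nat -> C -> A)
  (xi : nat -> nat) (x : C) (Lam : nat -> C) (zeta : nat -> nat) (t : vars) : A :=
  ((\prod_(1 <= a < m.-1) \prod_(1 <= i < (xi a.+1 - zeta a.+1).+1)
      \prod_((xi a - zeta a).+1 <= j < (xi a).+1)
        ((t a.+1 i - t a j + 1) / (t a.+1 i - t a j)))
   * (\prod_(1 <= l < m) \prod_(0 <= i < zeta l)
        ((t l (xi l - i)%N - x + Lam l.+1) / (t l (xi l - i)%N - x))))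
  *: Bethe m T (fun a => xi a - zeta a)%N t.

(* Main.v *)
Require Import Defs.
From HB Require Import structures.
From mathcomp Require Import all_boot all_order all_algebra all_fingroup all_field.
From mathcomp Require Import zify.
From Stdlib Require Import FunctionalExtensionality.
Import Order.TTheory GRing.Theory Num.Theory.
Set Implicit Arguments. Unset Strict Implicit. Unset Printing Implicit Defensive.
Local Open Scope ring_scope.

Definition permvo (a o k : nat) (s : 'S_k) (v : vars) : vars :=
  fun b i => if (b == a) && (o < i <= o + k)%N then v a (o + (Defs.pnat s (i - o.+1)).+1)%N
             else v b i.
Definition SymVo (R : zmodType) (a o k : nat) (F : vars -> R) : vars -> R :=
  fun v => \sum_(s : 'S_k) F (permvo a o s v).
Definition SymGroupso (R : zmodType) (gs : seq (nat * nat * nat)) (F : vars -> R) : vars -> R :=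
  foldr (fun p G => SymVo p.1.1 p.1.2 p.2 G) F gs.

Lemma pnat_ord k (s : 'S_k) (i : 'I_k) : Defs.pnat s i = val (s i).
Proof. by rewrite /Defs.pnat valK. Qed.

Lemma pnat_lt k (s : 'S_k) j (h : (j < k)%N) : Defs.pnat s j = val (s (Ordinal h)).
Proof. by rewrite -(pnat_ord s (Ordinal h)). Qed.

Lemma pnat_ge k (s : 'S_k) j : (k <= j)%N -> Defs.pnat s j = j.
Proof. by move=> h; rewrite /Defs.pnat insubF // ltnNge h. Qed.

Lemma pnat_ltk k (s : 'S_k) j : (j < k)%N -> (Defs.pnat s j < k)%N.
Proof. by move=> h; rewrite (pnat_lt s h) ltn_ord. Qed.

Lemma pnat_mul k (s t : 'S_k) j : Defs.pnat (s * t) j = Defs.pnat t (Defs.pnat s j).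
Proof.
case: (ltnP j k) => h.
  by rewrite !(pnat_lt _ h) permM -pnat_ord.
by rewrite !pnat_ge.
Qed.

Lemma pnat_inj k (s : 'S_k) i j : (i < k)%N -> (j < k)%N -> Defs.pnat s i = Defs.pnat s j -> i = j.
Proof.
move=> hi hj; rewrite (pnat_lt s hi) (pnat_lt s hj) => /val_inj /perm_inj.
by case.
Qed.

Lemma permv_o0 a k (s : 'S_k) v : permv a s v = permvo a 0 s v.
Proof.
apply: functional_extensionality => b; apply: functional_extensionality => i.
by rewrite /permv /permvo add0n subn1.
Qed.

Lemma SymV_o0 (R : zmodType) a k (F : vars -> R) : SymV a k F = SymVo a 0 k F.
Proof.
apply: functional_extensionality => v; apply: eq_bigr => s _.
by rewrite permv_o0.
Qed.

Lemma SymGroups_o (R : zmodType) (ls : seq nat) (f : nat -> nat) (F : vars -> R) :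
  SymGroups [seq (a, f a) | a <- ls] F = SymGroupso [seq (a, 0%N, f a) | a <- ls] F.
Proof. by elim: ls => //= a ls ->; rewrite SymV_o0. Qed.

Lemma permvo_out a o k (s : 'S_k) v b i :
  ~~ ((b == a) && (o < i <= o + k)%N) -> permvo a o s v b i = v b i.
Proof. by rewrite /permvo => /negbTE ->. Qed.

Lemma permvo_comm a b o p k l (s : 'S_k) (s' : 'S_l) v : a != b ->
  permvo a o s (permvo b p s' v) = permvo b p s' (permvo a o s v).
Proof.
move=> nab.
apply: functional_extensionality => c; apply: functional_extensionality => i.
rewrite /permvo.
case: (eqVneq c a) => [->|nca] /=.
  by rewrite (negbTE nab) /=; case: ifP.
case: (eqVneq c b) => [->|ncb] //=.
by rewrite eq_sym (negbTE nab) /=; case: ifP.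
Qed.

Lemma SymVo_comm (R : zmodType) a b o p k l (F : vars -> R) : a != b ->
  SymVo a o k (SymVo b p l F) = SymVo b p l (SymVo a o k F).
Proof.
move=> nab; apply: functional_extensionality => v; rewrite /SymVo exchange_big /=.
apply: eq_bigr => s' _; apply: eq_bigr => s _.
by rewrite permvo_comm // eq_sym.
Qed.

Lemma SymGroupso_comm (R : zmodType) gs a o k (F : vars -> R) :
  all (fun p => p.1.1 != a) gs ->
  SymGroupso gs (SymVo a o k F) = SymVo a o k (SymGroupso gs F).
Proof.
elim: gs => //= p gs IH /andP[hp hgs].
by rewrite IH // SymVo_comm.
Qed.

Lemma SymVo_scale (R : comRingType) (V : lmodType R) a o k (c : R) (F : vars -> V) :
  SymVo a o k (fun t => c *: F t) = fun t => c *: SymVo a o k F t.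
Proof.
by apply: functional_extensionality => v; rewrite /SymVo scaler_sumr.
Qed.

Lemma SymGroupso_scale (R : comRingType) (V : lmodType R) gs (c : R) (F : vars -> V) :
  SymGroupso gs (fun t => c *: F t) = fun t => c *: SymGroupso gs F t.
Proof. by elim: gs => //= p gs ->; rewrite SymVo_scale. Qed.

Lemma SymVo_move (R : comRingType) (V : lmodType R) a o k (X : vars -> R) (L : vars -> V) :
  (forall (s : 'S_k) t, L (permvo a o s t) = L t) ->
  (fun t => SymVo a o k X t *: L t) = SymVo a o k (fun t => X t *: L t).
Proof.
move=> hL; apply: functional_extensionality => v; rewrite /SymVo scaler_suml.
by apply: eq_bigr => s _; rewrite hL.
Qed.

Section Ext.
Variables (o k xi : nat) (hle : (o + k <= xi)%N) (s : 'S_k).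

Definition gext (j : nat) : nat :=
  if (o <= j < o + k)%N then (o + Defs.pnat s (j - o))%N else j.

Lemma gext_lt j : (j < xi)%N -> (gext j < xi)%N.
Proof.
rewrite /gext; case: ifP => // /andP[h1 h2] _.
have := @pnat_ltk k s (j - o) ltac:(lia). lia.
Qed.

Lemma gext_inj : injective gext.
Proof.
move=> i j; rewrite /gext.
case: ifP => hi; case: ifP => hj.
- move=> /addnI /pnat_inj E. have := E ltac:(lia) ltac:(lia). lia.
- have := @pnat_ltk k s (i - o) ltac:(lia). lia.
- have := @pnat_ltk k s (j - o) ltac:(lia). lia.
- by [].
Qed.

Definition gext_ord (j : 'I_xi) : 'I_xi := Ordinal (gext_lt (ltn_ord j)).

Lemma gext_ord_inj : injective gext_ord.
Proof. by move=> i j [] /gext_inj /val_inj. Qed.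

Definition eperm : 'S_xi := perm gext_ord_inj.

Lemma pnat_eperm j : Defs.pnat eperm j = gext j.
Proof.
case: (ltnP j xi) => h.
  by rewrite (pnat_lt _ h) permE.
rewrite pnat_ge // /gext; case: ifP => //; lia.
Qed.

Lemma permvo_absorb a (sg : 'S_xi) v :
  permvo a o s (permvo a 0 sg v) = permvo a 0 (eperm * sg) v.
Proof.
apply: functional_extensionality => b; apply: functional_extensionality => i.
rewrite /permvo; case: (eqVneq b a) => [->|nba] /=; last by [].
rewrite pnat_mul pnat_eperm /gext.
case: (boolP (o < i <= o + k)%N) => hw.
  have hp := @pnat_ltk k s (i - o.+1) ltac:(lia).
  rewrite (_ : (0 < o + (Defs.pnat s (i - o.+1)).+1 <= 0 + xi)%N = true); last lia.
  rewrite (_ : (0 < i <= 0 + xi)%N = true); last lia.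
  rewrite (_ : (o <= i - 1 < o + k)%N = true); last lia.
  rewrite (_ : (i - 1 - o = i - o.+1)%N); last lia.
  by rewrite !add0n subn1 eqxx /= addnS.
case: (boolP (0 < i <= 0 + xi)%N) => hr //=.
rewrite (_ : (o <= i - 1 < o + k)%N = false); last lia.
by [].
Qed.
End Ext.

Lemma SymVo_absorb (R : zmodType) a o k xi (F : vars -> R) :
  (o + k <= xi)%N ->
  SymVo a 0 xi (SymVo a o k F) = fun v => SymVo a 0 xi F v *+ k`!.
Proof.
move=> hle; apply: functional_extensionality => v.
rewrite /SymVo.
under eq_bigr => sg _ do under eq_bigr => s _ do rewrite (permvo_absorb hle).
rewrite exchange_big /=.
rewrite -card_Sn -sumr_const.
apply: eq_bigr => s _.
by rewrite [RHS](reindex_inj (mulgI (eperm hle s))).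
Qed.

Lemma main_sym (R : comRingType) (V : lmodType R) (ls : seq nat) (xi o eta : nat -> nat)
  (L : vars -> V) (U : vars -> R) :
  uniq ls -> (forall a, a \in ls -> o a + eta a <= xi a)%N ->
  (forall a, a \in ls -> forall (s : 'S_(eta a)) t, L (permvo a (o a) s t) = L t) ->
  SymGroupso [seq (a, 0%N, xi a) | a <- ls]
     (fun t => SymGroupso [seq (a, o a, eta a) | a <- ls] U t *: L t)
  = (fun t => (\prod_(a <- ls) ((eta a)`!)%:R) *:
       SymGroupso [seq (a, 0%N, xi a) | a <- ls] (fun t => U t *: L t) t).
Proof.
elim: ls => [|a ls IH] /= hu hle hL.
  by apply: functional_extensionality => t; rewrite big_nil scale1r.
move: hu => /andP[nal hu].
rewrite (@SymVo_move R V a (o a) (eta a)); last by move=> s t; apply: hL; rewrite inE eqxx.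
rewrite SymGroupso_comm; last first.
  rewrite all_map; apply/allP => b hb /=; apply/negP => /eqP E; subst b; by rewrite hb in nal.
rewrite IH //; first last.
- by move=> b hb; apply: hL; rewrite inE hb orbT.
- by move=> b hb; apply: hle; rewrite inE hb orbT.
rewrite SymVo_absorb; last by apply: hle; rewrite inE eqxx.
apply: functional_extensionality => t.
rewrite SymVo_scale big_cons -scalerA scaler_nat.
by [].
Qed.

Section Congr.
Variables (A : lalgType C) (T : nat -> nat -> C -> A) (xi : nat -> nat) (t t' : vars).
Hypothesis ht : forall j i, (0 < i <= xi j)%N -> t j i = t' j i.

Lemma Tblock_congr N k j : @Tblock A N k T xi t j = @Tblock A N k T xi t' j.
Proof.
rewrite /Tblock; congr prodop; apply/eq_in_map => i; rewrite mem_iota => hi.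
by rewrite ht //; lia.
Qed.

Lemma Rblock_congr N k i j : @Rblock A N k xi t i j = @Rblock A N k xi t' i j.
Proof.
rewrite /Rblock; congr prodop; congr flatten; apply/eq_in_map => p; rewrite mem_iota => hp.
apply/eq_in_map => l; rewrite mem_rev mem_iota => hl.
by rewrite !ht //; lia.
Qed.

Lemma That_congr K : @That A K T xi t = @That A K T xi t'.
Proof.
rewrite /That; congr prodop; congr (_ ++ _); apply: eq_map => ij.
  by rewrite Tblock_congr.
by rewrite Rblock_congr.
Qed.

Lemma Bethe_congr k : Bethe k T xi t = Bethe k T xi t'.
Proof. by case: k => //= K; rewrite That_congr. Qed.
End Congr.

Lemma win_prod (t : vars) a o k (s : 'S_k) (H : C -> C) :
  \prod_(i < k) H (permvo a o s t a (o + i.+1)%N) = \prod_(i < k) H (t a (o + i.+1)%N).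
Proof.
rewrite [RHS](reindex_inj (@perm_inj _ s)).
apply: eq_bigr => i _; rewrite /permvo eqxx /=.
rewrite (_ : (o < o + i.+1 <= o + k)%N = true); last by have := ltn_ord i; lia.
by rewrite (_ : (o + i.+1 - o.+1 = i)%N) ?pnat_ord //; lia.
Qed.

Lemma win0 (t : vars) a k (s : 'S_k) (H : C -> C) :
  \prod_(1 <= i < k.+1) H (permvo a 0 s t a i) = \prod_(1 <= i < k.+1) H (t a i).
Proof.
rewrite !big_add1 /= !big_mkord.
exact: (win_prod t a 0 s H).
Qed.

Lemma win_off (t : vars) a o k xi (s : 'S_k) (H : C -> C) : (o + k = xi)%N ->
  \prod_(o.+1 <= j < xi.+1) H (permvo a o s t a j) = \prod_(o.+1 <= j < xi.+1) H (t a j).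
Proof.
move=> E.
rewrite (big_addn 0 _ o.+1) [RHS](big_addn 0 _ o.+1) !big_mkord.
rewrite (_ : (xi.+1 - o.+1 = k)%N); last lia.
under eq_bigr => i _ do rewrite addnS addnC -addnS.
under [RHS]eq_bigr => i _ do rewrite addnS addnC -addnS.
exact: (win_prod t a o s H).
Qed.

Lemma win_rev (t : vars) a o k xi (s : 'S_k) (H : C -> C) : (o + k = xi)%N ->
  \prod_(0 <= i < k) H (permvo a o s t a (xi - i)%N) = \prod_(0 <= i < k) H (t a (xi - i)%N).
Proof.
move=> E.
rewrite big_nat_rev [RHS]big_nat_rev !big_mkord.
have hh : forall i : 'I_k, (xi - (0 + k - i.+1) = o + i.+1)%N.
  by move=> i; have := ltn_ord i; lia.
under eq_bigr => i _ do rewrite hh.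
under [RHS]eq_bigr => i _ do rewrite hh.
exact: win_prod.
Qed.

Lemma Lddot_inv (A : lalgType C) n m T xi x Lam (eta : nat -> nat) a (s : 'S_(eta a)) t :
  @Lddot A n m T xi x Lam eta (permvo a 0 s t) = @Lddot A n m T xi x Lam eta t.
Proof.
rewrite /Lddot; congr (_ * _ *: _).
- apply: eq_bigr => a' _; case: (eqVneq a'.+1 a) => [Ea|Na].
  + have ho : forall j, permvo a 0 s t a' j = t a' j.
      by move=> j; rewrite permvo_out // -Ea; case: eqP => //; lia.
    subst a.
    under eq_bigr => i _ do under eq_bigr => j _ do rewrite ho.
    exact: (win0 t a'.+1 s (fun y => \prod_((eta a').+1 <= j < (xi a').+1)
                              ((y - t a' j + 1) / (y - t a' j)))).
  + apply: eq_bigr => i _; apply: eq_big_nat => j hj.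
    rewrite (@permvo_out a 0 _ s t a'.+1) ?(negbTE Na) //.
    rewrite (@permvo_out a 0 _ s t a') //.
    case: (eqVneq a' a) => //= E; subst a'; lia.
- apply: eq_bigr => l _; case: (eqVneq l a) => [->|Nl].
    exact: (win0 t a s (fun y => (y - x + Lam a) / (y - x))).
  by apply: eq_bigr => i _; rewrite permvo_out // (negbTE Nl).
- apply: Bethe_congr => j i hi; rewrite permvo_out //.
  case: eqP => //= E; rewrite -E; lia.
Qed.

Lemma Ltilde_inv (A : lalgType C) m T xi x Lam (zeta : nat -> nat) a (s : 'S_(zeta a)) t :
  (zeta a <= xi a)%N ->
  @Ltilde A m T xi x Lam zeta (permvo a (xi a - zeta a) s t) = @Ltilde A m T xi x Lam zeta t.
Proof.
move=> hz.
rewrite /Ltilde; congr (_ * _ *: _).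
- apply: eq_bigr => a' _; case: (eqVneq a' a) => [Ea|Na].
  + subst a'.
    have ho : forall i, permvo a (xi a - zeta a) s t a.+1 i = t a.+1 i.
      by move=> i; rewrite permvo_out //; case: eqP => //; lia.
    apply: eq_bigr => i _; rewrite ho.
    apply: (@win_off t a (xi a - zeta a) (zeta a) (xi a) s (fun y => (t a.+1 i - y + 1) / (t a.+1 i - y))).
    lia.
  + apply: eq_big_nat => i hi; apply: eq_bigr => j _.
    rewrite (@permvo_out a _ _ s t a') ?(negbTE Na) //.
    rewrite (@permvo_out a _ _ s t a'.+1) //.
    case: (eqVneq a'.+1 a) => //= E; subst a; lia.
- apply: eq_bigr => l _; case: (eqVneq l a) => [->|Nl].
    apply: (@win_rev t a (xi a - zeta a) (zeta a) (xi a) s (fun y => (y - x + Lam a.+1) / (y - x))); lia.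
  by apply: eq_bigr => i _; rewrite permvo_out // (negbTE Nl).
- apply: Bethe_congr => j i hi; rewrite permvo_out //.
  case: eqP => //= E; subst j; lia.
Qed.

Lemma argJ_perm m xi (zeta : nat -> nat) a (s : 'S_(zeta a)) t : (a < m)%N ->
  permv a s (argJ m xi zeta t) = argJ m xi zeta (permvo a (xi a - zeta a) s t).
Proof.
move=> ham.
apply: functional_extensionality => b; apply: functional_extensionality => i.
rewrite /permv /argJ; case: (eqVneq b a) => [->|nba] /=.
  rewrite ham /permvo eqxx /=.
  case: (boolP (0 < i <= zeta a)%N) => hi.
    rewrite ifT; last lia.
    rewrite (_ : (xi a - zeta a + i - (xi a - zeta a).+1 = i.-1)%N); last lia.
    by rewrite addnS.
  by rewrite ifF //; apply/negbTE; lia.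
case: ifP => hb; first by rewrite permvo_out // (negbTE nba).
case: ifP => hbm; last by rewrite permvo_out // (negbTE nba).
move/eqP: hbm => E; subst b; rewrite permvo_out //; case: eqP => //= E; lia.
Qed.

Lemma symJ m xi (zeta : nat -> nat) (ls : seq nat) (F : vars -> C) :
  all (fun a => a < m)%N ls -> forall t,
  SymGroups [seq (a, zeta a) | a <- ls] F (argJ m xi zeta t)
  = SymGroupso [seq (a, xi a - zeta a, zeta a)%N | a <- ls] (fun t => F (argJ m xi zeta t)) t.
Proof.
elim: ls => //= a ls IH /andP[ha hls] t.
rewrite /SymV /SymVo; apply: eq_bigr => s _.
by rewrite argJ_perm // IH.
Qed.

Lemma prod_inv (ls : seq nat) (f : nat -> nat) :
  (\prod_(a <- ls) ((f a)`!%:R)^-1 : algC) * \prod_(a <- ls) (f a)`!%:R = 1.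
Proof.
rewrite -big_split big1 // => i _; rewrite /= mulVf // pnatr_eq0 -lt0n fact_gt0 //.
Qed.

Theorem lemma6p2 (A : lalgType algC) (n m : nat) (T : nat -> nat -> algC -> A)
  (xi : nat -> nat) (x : algC) (Lam : nat -> algC) :
  (1 <= m < n)%N ->
  (forall lab : nat -> nat,
     (forall j, (0 < j <= xi m)%N -> (m < lab j <= n)%N) ->
     (forall s, (m < s < n)%N -> (etaI (xi m) lab s <= xi s)%N) ->
     forall t : vars,
       SymGroups [seq (a, xi a) | a <- iota m.+1 (n - m.+1)]
         (fun t => U_I n m (xi m) lab t *: Lddot n m T xi x Lam (etaI (xi m) lab) t) t
       = (\prod_(m.+1 <= s < n) ((etaI (xi m) lab s)`!%:R)^-1 : algC)
         *: SymGroups [seq (a, xi a) | a <- iota m.+1 (n - m.+1)]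
              (fun t => W_I n m (xi m) lab t *: Lddot n m T xi x Lam (etaI (xi m) lab) t) t)
  /\
  (forall jl : nat -> nat,
     (forall j, (0 < j <= xi m)%N -> (0 < jl j <= m)%N) ->
     (forall s, (0 < s < m)%N -> (zetaJ (xi m) jl s <= xi s)%N) ->
     forall t : vars,
       SymGroups [seq (a, xi a) | a <- iota 1 m.-1]
         (fun t => Ut_J m (xi m) jl (argJ m xi (zetaJ (xi m) jl) t)
                   *: Ltilde m T xi x Lam (zetaJ (xi m) jl) t) t
       = (\prod_(1 <= s < m) ((zetaJ (xi m) jl s)`!%:R)^-1 : algC)
         *: SymGroups [seq (a, xi a) | a <- iota 1 m.-1]
              (fun t => Wt_J m (xi m) jl (argJ m xi (zetaJ (xi m) jl) t)
                        *: Ltilde m T xi x Lam (zetaJ (xi m) jl) t) t).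
Proof.
move=> hm; split.
- move=> lab hlab heta t.
  rewrite /W_I !SymGroups_o.
  rewrite (@main_sym _ _ (iota m.+1 (n - m.+1)) xi (fun _ => 0%N) (etaI (xi m) lab)).
  + by rewrite scalerA prod_inv scale1r.
  + exact: iota_uniq.
  + by move=> a; rewrite mem_iota => ha; rewrite add0n heta //; lia.
  + by move=> a _ s t'; apply: Lddot_inv.
- move=> jl hjl hz t.
  rewrite /Wt_J.
  have E : (fun t => SymGroups [seq (l, zetaJ (xi m) jl l) | l <- iota 1 m.-1]
                       (Ut_J m (xi m) jl) (argJ m xi (zetaJ (xi m) jl) t)
                     *: Ltilde m T xi x Lam (zetaJ (xi m) jl) t)
         = (fun t => SymGroupso [seq (a, xi a - zetaJ (xi m) jl a, zetaJ (xi m) jl a)%N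
                                 | a <- iota 1 m.-1]
                       (fun t => Ut_J m (xi m) jl (argJ m xi (zetaJ (xi m) jl) t)) t
                     *: Ltilde m T xi x Lam (zetaJ (xi m) jl) t).
    apply: functional_extensionality => t'; rewrite symJ //.
    by apply/allP => a; rewrite mem_iota; lia.
  rewrite E !SymGroups_o.
  rewrite (@main_sym _ _ (iota 1 m.-1) xi (fun a => xi a - zetaJ (xi m) jl a)%N (zetaJ (xi m) jl)).
  + rewrite scalerA.
    rewrite (_ : index_iota 1 m = iota 1 m.-1); last by rewrite /index_iota subn1.
    by rewrite prod_inv scale1r.
  + exact: iota_uniq.
  + by move=> a; rewrite mem_iota => ha; have := hz a ltac:(lia); lia.
  + move=> a; rewrite mem_iota => ha s t'; apply: Ltilde_inv; apply: hz; lia.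
Qed.
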